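(* Let $\mathcal P_1$ and $\mathcal P_2$ be two pairs of lines in the plane, the lines of $\mathcal P_1$ intersecting at ${\bf a}$ and those of $\mathcal P_2$ intersecting at ${\bf b}$, and let $A$ and $B$ be the cone matrices of the HR-cones generated by $\mathcal P_1$ and $\mathcal P_2$, respectively. Let $C=A-B$ and ${\bf c}=A{\bf a}-B{\bf b}$. If $A\neq B$, then $C$ is invertible and the rectangle locus for $\mathcal P_1$ and $\mathcal P_2$ is the set of all ${\bf x}\in\mathbb{R}^2$ such that $$({\bf x}-C^{-1}{\bf c})^TC({\bf x}-C^{-1}{\bf c})={\bf c}^TC^{-1}{\bf c}-{\bf a}^TA{\bf a}+{\bf b}^TB{\bf b}.$$
   Context: A pair of lines means two distinct lines; two pairs of lines are distinct pairs, possibly sharing one line. For a pair of distinct intersecting lines, the subset of $\mathbb{R}^3$ they generate (the set of $(x,y,\pm z)$ with $2z$ the length of a segment joining the two lines with midpoint $(x,y)$) is an HR-cone $\{(x,y,z): z^2=({\bf x}-{\bf a})^TA({\bf x}-{\bf a})\}$ with $A$ symmetric positive definite, $\det A=1$, and ${\bf a}$ the crossing point; $A$ is its cone matrix. The rectangle locus of two pairs $L_1,L_3$ and $L_2,L_4$ is the set of points $p$ that are the midpoint both of a segment joining $L_1$ and $L_3$ and of a segment joining $L_2$ and $L_4$, these two segments having equal length (equivalently, centers of possibly degenerate rectangles whose diagonals join the lines of the respective pairs). *)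

(* Defs.v *)
From HB Require Import structures.
From mathcomp Require Import all_boot all_order all_algebra.
Set Implicit Arguments. Unset Strict Implicit. Unset Printing Implicit Defensive.
Import Order.TTheory GRing.Theory Num.Theory.
Local Open Scope ring_scope.

(* Points of the plane R^2 are column vectors 'cV[R]_2; R is a real closed
   field (the real numbers being the intended instance). *)

Definition qform (R : rcfType) (M : 'M[R]_2) (v : 'cV[R]_2) : R :=
  ((v^T *m M *m v) 0 0).

Definition bform (R : rcfType) (u : 'cV[R]_2) (M : 'M[R]_2) (v : 'cV[R]_2) : R :=
  ((u^T *m M *m v) 0 0).

Definition sqlen (R : rcfType) (v : 'cV[R]_2) : R := (v^T *m v) 0 0.

Definition is_line (R : rcfType) (L : 'cV[R]_2 -> Prop) : Prop :=
  exists (p d : 'cV[R]_2), d != 0 /\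
    (forall x, L x <-> exists t : R, x = p + t *: d).

Definition pair_at (R : rcfType) (L L' : 'cV[R]_2 -> Prop) (a : 'cV[R]_2) : Prop :=
  [/\ is_line L, is_line L', L <> L', L a & L' a].

(* The subset of R^3 = R^2 x R generated by the pair L, L':
   the points (m, w) with w = z or w = -z, where 2z is the length of a
   segment joining L and L' with midpoint m. *)
Definition generated_set (R : rcfType) (L L' : 'cV[R]_2 -> Prop)
    (m : 'cV[R]_2) (w : R) : Prop :=
  exists p q, [/\ L p, L' q, m = 2^-1 *: (p + q) & (2 * w) ^+ 2 = sqlen (p - q)].

Definition cone_matrix (R : rcfType) (L L' : 'cV[R]_2 -> Prop)
    (a : 'cV[R]_2) (A : 'M[R]_2) : Prop :=
  [/\ A^T = A, (forall v : 'cV[R]_2, v != 0 -> 0 < qform A v), \det A = 1 &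
      forall m w, generated_set L L' m w <-> w ^+ 2 = qform A (m - a)].

Definition rect_locus (R : rcfType) (L1 L3 L2 L4 : 'cV[R]_2 -> Prop)
    (x : 'cV[R]_2) : Prop :=
  exists p1 p3 p2 p4, [/\ L1 p1, L3 p3, L2 p2 & L4 p4] /\
    [/\ x = 2^-1 *: (p1 + p3), x = 2^-1 *: (p2 + p4) &
    sqlen (p1 - p3) = sqlen (p2 - p4)].

(* Main.v *)
Require Import Defs.
From HB Require Import structures.
From mathcomp Require Import all_boot all_order all_algebra.
Import Order.TTheory GRing.Theory Num.Theory.
Local Open Scope ring_scope.
From mathcomp Require Import ring lra.
Notation i0 := (ord0 : 'I_2).
Notation i1 := (lift ord0 ord0 : 'I_2).
Lemma det2 {R : comNzRingType} (M : 'M[R]_2) : \det M = M i0 i0 * M i1 i1 - M i0 i1 * M i1 i0.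
Proof.
rewrite (expand_det_row _ 0) !big_ord_recl big_ord0 /cofactor !det_mx11 /= !mxE /=.
have -> : lift (0 : 'I_2) 0 = i1 by apply/val_inj.
have -> : lift (lift ord0 ord0 : 'I_2) 0 = i0 by apply/val_inj.

have -> : (0 : 'I_2) = i0 by apply/val_inj.
rewrite /bump /=. ring.
Qed.
Lemma q2 {R : comNzRingType} (M : 'M[R]_2) (u v : 'cV[R]_2): (u^T *m M *m v) 0 0 = u i0 0 * v i0 0 * M i0 i0 + u i0 0 * v i1 0 * M i0 i1 + u i1 0 * v i0 0 * M i1 i0 + u i1 0 * v i1 0 * M i1 i1.
Proof.
rewrite !(mxE, big_ord_recl, big_ord0) /=; ring.
Qed.
Lemma mv2 {R : comNzRingType} (M : 'M[R]_2) (v : 'cV[R]_2) i: (M *m v) i 0 = M i i0 * v i0 0 + M i i1 * v i1 0.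
Proof.
rewrite !(mxE, big_ord_recl, big_ord0) /=; ring.
Qed.
Lemma l2 {R : comNzRingType} (v : 'cV[R]_2): (v^T *m v) 0 0 = v i0 0 ^+ 2 + v i1 0 ^+2.
Proof.
rewrite !(mxE, big_ord_recl, big_ord0) /=; ring.
Qed.
Lemma ip2 {R : comNzRingType} (u v : 'cV[R]_2): (u^T *m v) 0 0 = u i0 0 * v i0 0 + u i1 0 * v i1 0.
Proof.
rewrite !(mxE, big_ord_recl, big_ord0) /=; ring.
Qed.
Lemma mx2P {R : comNzRingType} (M N : 'M[R]_2) : M i0 i0 = N i0 i0 -> M i0 i1 = N i0 i1 -> M i1 i0 = N i1 i0 -> M i1 i1 = N i1 i1 -> M = N.
Proof.
move=> h1 h2 h3 h4; apply/matrixP=> i j.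
have E : forall k : 'I_2, k = i0 \/ k = i1.
  by move=> [[|[|//]]] H; [left|right]; apply/val_inj.
by case: (E i) => ->; case: (E j) => ->.
Qed.

Lemma qform_ge0 {R : rcfType} (A : 'M[R]_2) v :
  (forall v : 'cV[R]_2, v != 0 -> 0 < qform A v) -> 0 <= qform A v.
Proof.
move=> hp; case: (eqVneq v 0) => [->|nz]; last exact/ltW/hp.
by rewrite /qform mulmx0 mxE.
Qed.

Lemma sqlen_ge0 {R : rcfType} (v : 'cV[R]_2) : 0 <= sqlen v.
Proof. rewrite /sqlen l2; nra. Qed.

Lemma locus_iff {R : rcfType} {L1 L3 L2 L4 : 'cV[R]_2 -> Prop}
    {a b : 'cV[R]_2} {A B : 'M[R]_2} x :
  cone_matrix L1 L3 a A -> cone_matrix L2 L4 b B ->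
  rect_locus L1 L3 L2 L4 x <-> qform A (x - a) = qform B (x - b).
Proof.
move=> [_ pA _ gA] [_ pB _ gB]; split.
- move=> [p1 [p3 [p2 [p4 [[h1 h3 h2 h4] [e1 e2 hl]]]]]].
  set w := Num.sqrt (sqlen (p1 - p3)) / 2.
  have hw : (2 * w) ^+ 2 = sqlen (p1 - p3).
    by rewrite /w mulrC -mulrA mulVf ?pnatr_eq0 // mulr1 sqr_sqrtr // sqlen_ge0.
  have := (gA x w).1; have := (gB x w).1.
  move=> HB HA; rewrite -HA; last by exists p1, p3; split.
  rewrite -HB //; exists p2, p4; split => //; by rewrite -hl.
- move=> heq.
  set w := Num.sqrt (qform A (x - a)).
  have hwA : w ^+ 2 = qform A (x - a) by rewrite sqr_sqrtr // qform_ge0.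
  have [p1 [p3 [h1 h3 e1 l1]]] := (gA x w).2 hwA.
  have [p2 [p4 [h2 h4 e2 l2']]] := (gB x w).2 (etrans hwA heq).
  exists p1, p3, p2, p4; split; first by split.
  by split => //; rewrite -l1 -l2'.
Qed.

Lemma symE {R : rcfType} {A : 'M[R]_2} : A^T = A -> A i1 i0 = A i0 i1.
Proof. by move=> h; have := congr1 (fun M : 'M[R]_2 => M i0 i1) h; rewrite mxE. Qed.

Theorem lemma4p5 (R : rcfType) (L1 L3 L2 L4 : 'cV[R]_2 -> Prop)
    (a b : 'cV[R]_2) (A B : 'M[R]_2) :
  pair_at L1 L3 a -> pair_at L2 L4 b ->
  cone_matrix L1 L3 a A -> cone_matrix L2 L4 b B ->
  A != B ->
  let C := A - B in
  let c := A *m a - B *m b in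
  C \in unitmx /\
  (forall x : 'cV[R]_2,
     rect_locus L1 L3 L2 L4 x <->
     qform C (x - invmx C *m c) =
       bform c (invmx C) c - qform A a + qform B b).
Proof.
move=> _ _ cA cB nAB C c.
have [sA _ dA _] := cA; have [sB _ dB _] := cB.
have sA' := symE sA; have sB' := symE sB.
have uC : C \in unitmx.
  rewrite unitmxE unitfE; apply: contra nAB => /eqP dC.
  rewrite det2 in dA; rewrite det2 in dB; rewrite det2 /C !mxE in dC.
  rewrite sA' in dA dC; rewrite sB' in dB dC.
  set a1 := A i0 i0 in dA dC *; set a2 := A i0 i1 in dA dC *; set a3 := A i1 i1 in dA dC *.
  set b1 := B i0 i0 in dB dC *; set b2 := B i0 i1 in dB dC *; set b3 := B i1 i1 in dB dC *.
  have key : (a1 - b1) ^+ 2 + (a1 * b2 - a2 * b1) ^+ 2 = 0.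
    have -> : (a1 - b1) ^+ 2 + (a1 * b2 - a2 * b1) ^+ 2 =
       a1 * b1 * ((a1 * a3 - a2 * a2 - 1) + (b1 * b3 - b2 * b2 - 1)
          - ((a1 - b1) * (a3 - b3) - (a2 - b2) * (a2 - b2)))
       - b1 ^+ 2 * (a1 * a3 - a2 * a2 - 1) - a1 ^+ 2 * (b1 * b3 - b2 * b2 - 1) by ring.
    by rewrite dA dB dC !subrr; ring.
  have s1 := sqr_ge0 (a1 - b1); have s2 := sqr_ge0 (a1 * b2 - a2 * b1).
  have z1 : (a1 - b1) ^+ 2 = 0 by lra.
  have z2 : (a1 * b2 - a2 * b1) ^+ 2 = 0 by lra.
  have e1 : a1 = b1 by apply/eqP; rewrite -subr_eq0 -sqrf_eq0 z1.
  have e2 : a1 * b2 = a2 * b1 by apply/eqP; rewrite -subr_eq0 -sqrf_eq0 z2.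
  have a1nz : a1 != 0.
    apply/eqP => h; move: dA; rewrite h mul0r sub0r => dA.
    have hh : (0:R) <= a2 * a2 by rewrite -expr2; apply: sqr_ge0.
    have h2 : a2 * a2 = -1 by rewrite -dA opprK.
    by rewrite h2 oppr_ge0 ler10 in hh.
  have e3 : a2 = b2.
    apply: (mulfI a1nz); rewrite e2 e1; ring.
  have e4 : a3 = b3.
    apply: (mulfI a1nz); rewrite [X in X = _](_ : _ = 1 + a2 * a2); last by rewrite -dA; ring.
    by rewrite e1 e3 -dB; ring.
  apply/eqP; apply: mx2P => //; by rewrite sA' sB'.
split => // x.
rewrite (locus_iff x cA cB).
set y := invmx C *m c.
have hy : C *m y = c by rewrite /y mulmxA mulmxV // mul1mx.
have sC : C^T = C by rewrite /C linearB /= sA sB.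
have hyT : y^T *m C = c^T by rewrite -{1}sC -trmx_mul hy.
have -> : bform c (invmx C) c = (c^T *m y) 0 0 by rewrite /bform -mulmxA.
have trB : forall u v : 'cV[R]_2, (u - v)^T = u^T - v^T.
  by move=> u v; apply/matrixP => i j; rewrite !mxE.
have eC : C = A - B by [].
have ec : c = A *m a - B *m b by [].
clearbody y C c.
rewrite /qform [(x - y)^T]trB !mulmxBl !mulmxBr hyT -(mulmxA x^T C y) hy !mxE.
rewrite ec eC !(mxE, big_ord_recl, big_ord0) /= sA' sB'.
split => h; lra.
Qed.
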